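(* Let $\mathcal{S}$ be a set of states, $\mathcal{E}$ a set of events, and $\rightarrow$ a small-step transition relation $s \xrightarrow{t} s'$ on $\mathcal{S}$ labelled by finite traces $t \in \mathcal{E}^*$. Let $s \in \mathcal{S}$, let $\tau$ be a general trace (a finite or infinite sequence of events), and suppose there exists $n \in \mathbb{N}_0$ with $\mathrm{Forever}(s, \tau, n)$. Then: (1) if $\tau$ is finite, then $\mathrm{ForeverFinite}(\tau, s)$; (2) if $\tau$ is infinite, then $\mathrm{Reacts}(\tau, s)$. Moreover, if $\rightarrow$ is determinate, the converse also holds: for finite $\tau$, $\mathrm{ForeverFinite}(\tau, s)$ implies that there is an $n\in\mathbb{N}_0$ with $\mathrm{Forever}(s,\tau,n)$; and for infinite $\tau$, $\mathrm{Reacts}(\tau, s)$ implies that there is an $n\in\mathbb{N}_0$ with $\mathrm{Forever}(s,\tau,n)$.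
   Context: Traces: $\varepsilon$ denotes the empty trace and $t\cdot\tau$ denotes concatenation of a finite trace $t$ with a finite or infinite trace $\tau$. For finite traces, $s \xrightarrow{t}{}^{*} s'$ denotes the reflexive–transitive closure of the step relation: $s \xrightarrow{\varepsilon}{}^{*} s$, and if $s \xrightarrow{t_1} s_1$ and $s_1 \xrightarrow{t_2}{}^{*} s'$ then $s \xrightarrow{t_1\cdot t_2}{}^{*} s'$. The following predicates are defined coinductively (as greatest fixed points of the given rules): - Silent divergence $\mathrm{DivSilent}(s)$: if $s \xrightarrow{\varepsilon} s'$ and $\mathrm{DivSilent}(s')$ then $\mathrm{DivSilent}(s)$. - (Inductive, no recursion) Finite-trace divergence $\mathrm{ForeverFinite}(t, s)$ for finite $t$: holds iff there is $s'$ with $s \xrightarrow{t}{}^{*} s'$ and $\mathrm{DivSilent}(s')$. - Reactive divergence $\mathrm{Reacts}(\omega, s)$ for infinite $\omega$: if $s \xrightarrow{t}{}^{*} s'$, $t \neq \varepsilon$, and $\mathrm{Reacts}(\omega, s')$, then $\mathrm{Reacts}(t\cdot\omega, s)$. - General-trace divergence $\mathrm{Forever}(s, \tau, n)$ for a general (finite or infinite) trace $\tau$ and $n \in \mathbb{N}_0$: if $s \xrightarrow{t} s'$, $\mathrm{Forever}(s', \tau, m)$ for some $m\in\mathbb{N}_0$, and $\mathrm{guard}(\tau, n, t, m)$, then $\mathrm{Forever}(s, t\cdot\tau, n)$, where $\mathrm{guard}(\tau,n,t,m)$ means: $\tau = \varepsilon$, or ($t = \varepsilon$ implies $m < n$).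 Determinacy (in the sense of CompCert): the step relation is determinate if every single step $s \xrightarrow{t} s'$ has a trace $t$ of length at most one, and whenever $s \xrightarrow{t_1} s_1$ and $s \xrightarrow{t_2} s_2$ from the same state $s$, then $t_1$ and $t_2$ match (in particular $t_1 = \varepsilon$ iff $t_2 = \varepsilon$), and $t_1 = t_2$ implies $s_1 = s_2$. *)

(* Defs.v *)
From Stdlib Require Import List Arith.
Import ListNotations.
Set Implicit Arguments.

Section Traces.
Variable S E : Type.
Variable step : S -> list E -> S -> Prop.

CoInductive gtrace : Type :=
| gnil : gtrace
| gcons : E -> gtrace -> gtrace.

Definition gapp (t : list E) (tau : gtrace) : gtrace := fold_right gcons tau t.

Definition gof_list (t : list E) : gtrace := gapp t gnil.

CoInductive ginfinite : gtrace -> Prop :=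
| ginfinite_cons : forall e tau, ginfinite tau -> ginfinite (gcons e tau).

Inductive star : S -> list E -> S -> Prop :=
| star_refl : forall s, star s [] s
| star_step : forall s t1 s1 t2 s',
    step s t1 s1 -> star s1 t2 s' -> star s (t1 ++ t2) s'.

CoInductive DivSilent : S -> Prop :=
| divsilent_intro : forall s s', step s [] s' -> DivSilent s' -> DivSilent s.

Definition ForeverFinite (t : list E) (s : S) : Prop :=
  exists s', star s t s' /\ DivSilent s'.

CoInductive Reacts : gtrace -> S -> Prop :=
| reacts_intro : forall s t s' omega,
    star s t s' -> t <> [] -> Reacts omega s' -> Reacts (gapp t omega) s.

Definition guard (tau : gtrace) (n : nat) (t : list E) (m : nat) : Prop :=
  tau = gnil \/ (t = [] -> m < n).

CoInductive Forever : S -> gtrace -> nat -> Prop :=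
| forever_intro : forall s t s' tau n m,
    step s t s' -> Forever s' tau m -> guard tau n t m ->
    Forever s (gapp t tau) n.

(* Determinacy: traces of single steps have length <= 1; two steps from the
   same state have traces that "match" (here: the minimal matching condition
   t1 = [] <-> t2 = []), and equal traces lead to equal states. *)
Definition determinate : Prop :=
  (forall s t s', step s t s' -> length t <= 1) /\
  (forall s t1 s1 t2 s2, step s t1 s1 -> step s t2 s2 ->
     (t1 = [] <-> t2 = []) /\ (t1 = t2 -> s1 = s2)).

End Traces.

Arguments gnil {E}.

(* Main.v *)
Require Import Defs.
From Stdlib Require Import List Arith.
Import ListNotations.

Set Implicit Arguments.
Section P.
Variables (S E : Type) (step : S -> list E -> S -> Prop).

Lemma Forever_inv s tau n : Forever step s tau n ->
  exists t s' tau' m, step s t s' /\ Forever step s' tau' m /\ guard tau' n t m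
    /\ tau = gapp t tau'.
Proof. intro H; destruct H; eauto 10. Qed.

Lemma Reacts_inv tau s : Reacts step tau s ->
  exists t s' om, star step s t s' /\ t <> [] /\ Reacts step om s' /\ tau = gapp t om.
Proof. intro H; destruct H; eauto 10. Qed.

Lemma Div_inv s : DivSilent step s -> exists s', step s [] s' /\ DivSilent step s'.
Proof. intro H; destruct H; eauto. Qed.

Lemma star_trans s t1 s1 t2 s2 : star step s t1 s1 -> star step s1 t2 s2 ->
  star step s (t1 ++ t2) s2.
Proof.
  induction 1; intros; auto. rewrite <- app_assoc. econstructor; eauto.
Qed.

Lemma star_one s t s' : step s t s' -> star step s t s'.
Proof. intro H. rewrite <- (app_nil_r t). econstructor; eauto. constructor. Qed.

Lemma gapp_app (t1 t2 : list E) om : gapp (t1 ++ t2) om = gapp t1 (gapp t2 om).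
Proof. unfold gapp. apply fold_right_app. Qed.

Lemma gapp_gof (t1 : list E) tau' t : gapp t1 tau' = gof_list t ->
  exists t', t = t1 ++ t' /\ tau' = gof_list t'.
Proof.
  revert t; induction t1 as [|e t1 IH]; intros t H.
  - exists t; auto.
  - destruct t as [|e' t]; simpl in H; [discriminate|].
    injection H; intros H1 H2; subst.
    destruct (IH t H1) as [t' [-> ->]]. exists t'; auto.
Qed.

CoFixpoint F_nil s n : Forever step s gnil n -> DivSilent step s.
Proof.
  intro H. destruct (Forever_inv H) as [t [s' [tau' [m [Hs [HF [Hg Heq]]]]]]].
  destruct t as [|e t]; simpl in Heq; [|discriminate]. subst.
  apply divsilent_intro with s'; [exact Hs|]. exact (F_nil _ _ HF).
Qed.

Lemma P1 : forall t n s, Forever step s (gof_list t) n -> ForeverFinite step t s.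
Proof.
  intro t.
  induction t as [t IHt] using (Wf_nat.induction_ltof1 _ (@length E)).
  intro n. induction n as [n IHn] using lt_wf_ind.
  intros s H.
  destruct t as [|e t0].
  - exists s. split. constructor. eapply F_nil; exact H.
  - destruct (Forever_inv H) as [t1 [s1 [tau1 [m [Hs [HF [Hg Heq]]]]]]].
    symmetry in Heq. destruct (gapp_gof _ _ _ Heq) as [t' [Ht' ->]].
    destruct t1 as [|e1 t1].
    + simpl in Ht'. subst t'.
      destruct Hg as [Hg|Hg]; [discriminate|].
      destruct (IHn m (Hg eq_refl) s1 HF) as [s2 [Hst Hd]].
      exists s2; split; auto. change (e :: t0) with ([] ++ e :: t0). econstructor; eauto.
    + assert (Hl : length t' < length (e :: t0)).
      { rewrite Ht'. simpl. rewrite length_app. simpl. apply le_n_S. apply Nat.le_add_l. }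
      destruct (IHt t' Hl m s1 HF) as [s2 [Hst Hd]].
      exists s2; split; auto. rewrite Ht'. econstructor; eauto.
Qed.

Lemma ginf_gapp (t : list E) om : ginfinite (gapp t om) -> ginfinite om.
Proof.
  induction t; simpl; intro H; auto. inversion H; auto.
Qed.

Lemma P2a : forall n s tau, Forever step s tau n -> ginfinite tau ->
  exists t s' tau' m, star step s t s' /\ t <> [] /\ tau = gapp t tau'
    /\ Forever step s' tau' m.
Proof.
  intro n. induction n as [n IHn] using lt_wf_ind.
  intros s tau H Hi.
  destruct (Forever_inv H) as [t1 [s1 [tau1 [m [Hs [HF [Hg Heq]]]]]]].
  destruct t1 as [|e t1].
  - simpl in Heq; subst tau1.
    destruct Hg as [Hg|Hg]; [subst; inversion Hi|].
    destruct (IHn m (Hg eq_refl) s1 tau HF Hi) as [t [s' [tau' [m' [A [B [C D]]]]]]].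
    exists t, s', tau', m'. repeat split; auto.
    change t with ([] ++ t). econstructor; eauto.
  - exists (e :: t1), s1, tau1, m. repeat split; auto.
    + apply star_one; auto.
    + discriminate.
Qed.

CoFixpoint P2 s tau n : Forever step s tau n -> ginfinite tau -> Reacts step tau s.
Proof.
  intros H Hi.
  destruct (P2a H Hi) as [t [s' [tau' [m [A [B [C D]]]]]]].
  subst tau. apply reacts_intro with s'; auto.
  exact (P2 _ _ _ D (ginf_gapp _ _ Hi)).
Qed.

CoFixpoint Div_forever s : DivSilent step s -> Forever step s gnil 0.
Proof.
  intro H. destruct (Div_inv H) as [s' [Hs Hd]].
  change (@gnil E) with (gapp (@nil E) gnil).
  apply forever_intro with s' 0; auto.
  left; reflexivity.
Qed.

Lemma P3 s t s' : star step s t s' -> DivSilent step s' ->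
  exists n, Forever step s (gof_list t) n.
Proof.
  induction 1 as [s|s t1 s1 t2 s' Hs Hst IH]; intro Hd.
  - exists 0. apply Div_forever; auto.
  - destruct (IH Hd) as [m Hm]. exists (Datatypes.S m).
    unfold gof_list. rewrite gapp_app.
    apply forever_intro with s1 m; auto.
    right. intros _. auto.
Qed.

Definition Xinv s tau := exists t s' om, star step s t s' /\ tau = gapp t om /\ Reacts step om s'.

Inductive reach : S -> gtrace E -> nat -> Prop :=
| re_silent : forall s s1 tau n, step s [] s1 -> reach s1 tau n -> reach s tau (Datatypes.S n)
| re_event : forall s t s1 tau' n, step s t s1 -> t <> [] -> Xinv s1 tau' ->
    reach s (gapp t tau') n.

Lemma LB s t s2 : star step s t s2 -> t <> [] -> forall om, Reacts step om s2 ->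
  exists n, reach s (gapp t om) n.
Proof.
  induction 1 as [s|s t1 s1 t2 s' Hs Hst IH]; intros Hne om HR; [congruence|].
  destruct t1 as [|e t1].
  - destruct (IH Hne om HR) as [n Hn]. exists (Datatypes.S n). simpl. econstructor; eauto.
  - exists 0. rewrite gapp_app. apply re_event with s1; [auto|discriminate|].
    exists t2, s', om; auto.
Qed.

Lemma X_reach s tau : Xinv s tau -> exists n, reach s tau n.
Proof.
  intros [t [s' [om [Hst [-> HR]]]]].
  destruct (Reacts_inv HR) as [t2 [s2 [om2 [A [B [C ->]]]]]].
  rewrite <- gapp_app. apply LB with s2; auto.
  - eapply star_trans; eauto.
  - intro Hc. apply app_eq_nil in Hc. destruct Hc; auto.
Qed.

CoFixpoint reach_forever s tau n : reach s tau n -> ginfinite tau -> Forever step s tau n.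
Proof.
  intros H Hi. destruct H as [s s1 tau n Hs Hr|s t s1 tau' n Hs Hne Hx].
  - change tau with (gapp [] tau).
    apply forever_intro with s1 n; [auto| |].
    + exact (reach_forever _ _ _ Hr Hi).
    + right; auto.
  - destruct (X_reach Hx) as [m Hm].
    apply forever_intro with s1 m; [auto| |].
    + exact (reach_forever _ _ _ Hm (ginf_gapp _ _ Hi)).
    + right; intro; congruence.
Qed.

End P.
Unset Implicit Arguments.

Theorem mainTheorem1 (S E : Type) (step : S -> list E -> S -> Prop)
    (s : S) (tau : gtrace E) :
  ((exists n, Forever step s tau n) ->
     (forall t : list E, tau = gof_list t -> ForeverFinite step t s) /\
     (ginfinite tau -> Reacts step tau s)) /\
  (determinate step ->
     (forall t : list E, tau = gof_list t ->
        ForeverFinite step t s -> exists n, Forever step s tau n) /\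
     (ginfinite tau -> Reacts step tau s -> exists n, Forever step s tau n)).
Proof.
  split.
  - intros [n H]. split.
    + intros t ->. eapply P1; eauto.
    + intro Hi. eapply P2; eauto.
  - intros _. split.
    + intros t -> [s' [Hst Hd]]. eapply P3; eauto.
    + intros Hi HR.
      assert (Hx : Xinv step s tau) by (exists [], s, tau; split; [constructor|auto]).
      destruct (X_reach Hx) as [n Hn]. exists n. apply reach_forever; auto.
Qed.
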